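(* If $C$ is an identifying code of $K_n\times K_m$ with $cs(C)=n-1$ and $rs(C)=m-1$, then no vertex of $C$ is isolated in $C$.
   Context: $K_n\times K_m$ is the direct product of complete graphs: vertex set $[n]\times[m]$, with $(i,r)$ adjacent to $(j,s)$ iff $i\ne j$ and $r \ne s$. An identifying code is a dominating set $C$ with $N[x]\cap C\ne N[y]\cap C$ for all distinct vertices $x,y$ ($N[x]$ the closed neighborhood). Columns: $C_i=\{(i,t):t\in[m]\}$; rows: $R_r=\{(k,r):k\in[n]\}$. $cs(C)$ (resp. $rs(C)$) is the number of columns (resp. rows) meeting $C$. A vertex $v=(i,r)$ is isolated in $C$ if $C\cap C_i=\{v\}$ and $C\cap R_r=\{v\}$. *)

(* Defs.v *)
From mathcomp Require Import all_boot.
Set Implicit Arguments. Unset Strict Implicit. Unset Printing Implicit Defensive.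

Definition vtx (n m : nat) := ('I_n * 'I_m)%type.

Definition adjKK n m (x y : vtx n m) : bool := (x.1 != y.1) && (x.2 != y.2).

Definition cnbhd n m (x : vtx n m) : {set vtx n m} :=
  [set y | (y == x) || adjKK x y].

Definition dominating n m (C : {set vtx n m}) : Prop :=
  forall x : vtx n m, cnbhd x :&: C != set0.

Definition identifying_code n m (C : {set vtx n m}) : Prop :=
  dominating C /\
  forall x y : vtx n m, x != y -> cnbhd x :&: C != cnbhd y :&: C.

Definition column n m (i : 'I_n) : {set vtx n m} := [set v | v.1 == i].
Definition row n m (r : 'I_m) : {set vtx n m} := [set v | v.2 == r].

Definition cs n m (C : {set vtx n m}) : nat :=
  #|[set i : 'I_n | column m i :&: C != set0]|.
Definition rs n m (C : {set vtx n m}) : nat :=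
  #|[set r : 'I_m | row n r :&: C != set0]|.

Definition isolated n m (C : {set vtx n m}) (v : vtx n m) : Prop :=
  column m v.1 :&: C = [set v] /\ row n v.2 :&: C = [set v].

(* Main.v *)
Require Import Defs.
From mathcomp Require Import all_boot.

Lemma empty_col n m (C : {set vtx n m}) (i0 : 'I_n) :
  cs C = n - 1 -> exists j : 'I_n, forall c, c \in C -> c.1 != j.
Proof.
move=> H.
case: (pickP [pred j : 'I_n | j \notin [set i : 'I_n | column m i :&: C != set0]]).
  move=> j /=; rewrite inE negbK => /eqP Hj; exists j => c cC.
  apply/negP => /eqP E.
  have : c \in column m j :&: C by rewrite !inE E eqxx cC.
  by rewrite Hj inE.
move=> Hall; exfalso.
have : [set i : 'I_n | column m i :&: C != set0] = setT.
  by apply/setP => j; move: (Hall j); rewrite /= !inE => /negbFE ->.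
move=> E; move: H; rewrite /cs E cardsT card_ord.
by case: n i0 {C Hall E} => [[]|k] //= _; rewrite subn1 /= => /eqP; rewrite -[k.+1]addn1 -{2}[k]addn0 eqn_add2l.
Qed.

Lemma empty_row n m (C : {set vtx n m}) (r0 : 'I_m) :
  rs C = m - 1 -> exists s : 'I_m, forall c, c \in C -> c.2 != s.
Proof.
move=> H.
case: (pickP [pred j : 'I_m | j \notin [set i : 'I_m | row n i :&: C != set0]]).
  move=> j /=; rewrite inE negbK => /eqP Hj; exists j => c cC.
  apply/negP => /eqP E.
  have : c \in row n j :&: C by rewrite !inE E eqxx cC.
  by rewrite Hj inE.
move=> Hall; exfalso.
have : [set i : 'I_m | row n i :&: C != set0] = setT.
  by apply/setP => j; move: (Hall j); rewrite /= !inE => /negbFE ->.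
move=> E; move: H; rewrite /rs E cardsT card_ord.
by case: m r0 {C Hall E} => [[]|k] //= _; rewrite subn1 /= => /eqP; rewrite -[k.+1]addn1 -{2}[k]addn0 eqn_add2l.
Qed.

Theorem mainTheorem11 (n m : nat) (C : {set vtx n m}) :
  identifying_code C -> cs C = n - 1 -> rs C = m - 1 ->
  forall v : vtx n m, v \in C -> ~ isolated C v.
Proof.
move=> [_ Hid] Hcs Hrs [i r] vC [Hcol Hrow] /=.
have [j Hj] := @empty_col n m C i Hcs.
have [s Hs] := @empty_row n m C r Hrs.
have Hcolv : forall c, c \in C -> c.1 = i -> c = (i, r).
  move=> c cC E; have : c \in column m (i, r).1 :&: C by rewrite !inE E eqxx cC.
  by rewrite Hcol inE => /eqP.
have Hrowv : forall c, c \in C -> c.2 = r -> c = (i, r).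
  move=> c cC E; have : c \in row n (i, r).2 :&: C by rewrite !inE E eqxx cC.
  by rewrite Hrow inE => /eqP.
have neq : (j, r) != (i, s).
  by apply/negP => /eqP [E _]; move: (Hj _ vC); rewrite /= E eqxx.
apply: (negP (Hid _ _ neq)); apply/eqP/setP => c; rewrite !inE /adjKK /=.
case cC: (c \in C); rewrite ?andbF //.
have c1 := Hj _ cC; have c2 := Hs _ cC.
have -> : (c == (j, r)) = false by apply/negbTE/negP => /eqP E; move: c1; rewrite E eqxx.
have -> : (c == (i, s)) = false by apply/negbTE/negP => /eqP E; move: c2; rewrite E eqxx.
rewrite /= eq_sym c1 /= [s == _]eq_sym (negbTE c2) !andbT eq_sym [i == _]eq_sym.
case: (eqVneq c.1 i) => [E1|N1]; case: (eqVneq c.2 r) => [E2|N2] //.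
- by move: N2; rewrite (Hcolv _ cC E1) eqxx.
- by move: N1; rewrite (Hrowv _ cC E2) eqxx.
Qed.
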